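(* Let $n\ge2$, let $u$ be a polar $n$-complex number and $m$ an integer; if $m\le0$ assume $v_+\ne0$, $v_-\ne0$ (for even $n$) and $\rho_k\ne0$ for all $k$. Then, for even $n$, $$u^m=e_+v_+^m+e_-v_-^m+\sum_{k=1}^{n/2-1}\rho_k^m\big(e_k\cos m\phi_k+\tilde e_k\sin m\phi_k\big),$$ and for odd $n$, $$u^m=e_+v_+^m+\sum_{k=1}^{(n-1)/2}\rho_k^m\big(e_k\cos m\phi_k+\tilde e_k\sin m\phi_k\big),$$ where a term with $\rho_k=0$ (possible only for $m\ge1$) is interpreted as $0$.
   Context: Polar $n$-complex numbers: $u=x_0+h_1x_1+\cdots+h_{n-1}x_{n-1}$, $x_j\in\mathbb{R}$, $h_0=1$, componentwise addition, bilinear multiplication $h_jh_k=h_{(j+k)\bmod n}$. Canonical variables: $v_+=\sum_px_p$; for even $n$, $v_-=\sum_p(-1)^px_p$; for $k=1,\dots,\lfloor(n-1)/2\rfloor$, $v_k=\sum_px_p\cos(2\pi kp/n)$, $\tilde v_k=\sum_px_p\sin(2\pi kp/n)$, $\rho_k=\sqrt{v_k^2+\tilde v_k^2}$, and for $\rho_k>0$, $\phi_k$ with $\cos\phi_k=v_k/\rho_k$, $\sin\phi_k=\tilde v_k/\rho_k$. Canonical base: $e_+=\frac1n\sum_ph_p$, $e_-=\frac1n\sum_p(-1)^ph_p$ (even $n$), $e_k=\frac2n\sum_p\cos(2\pi kp/n)h_p$, $\tilde e_k=\frac2n\sum_p\sin(2\pi kp/n)h_p$. *)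

(* Defs.v *)
From HB Require Import structures.
From mathcomp Require Import all_boot all_order all_algebra.
From mathcomp Require Import all_classical all_reals all_analysis.
From Stdlib Require Import ClassicalEpsilon.
Set Implicit Arguments. Unset Strict Implicit. Unset Printing Implicit Defensive.
Import Order.TTheory GRing.Theory Num.Theory.
Local Open Scope ring_scope.

Section PolarNComplex.
Variables (R : realType) (n : nat).

(* A polar n-complex number u = x_0 + h_1 x_1 + ... + h_{n-1} x_{n-1}
   is represented by its coordinate function x : 'I_n -> R. *)
Definition ncx := 'I_n -> R.

(* Addition is componentwise; multiplication is bilinear with
   h_j h_k = h_{(j+k) mod n}. *)
Definition ncx_mul (u w : ncx) : ncx := fun k =>
  \sum_(j < n) \sum_(l < n) (if ((j + l) %% n == k)%N then u j * w l else 0).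

Definition ncx_one : ncx := fun k => if val k == 0%N then 1 else 0.

Definition ncx_npow (u : ncx) (p : nat) : ncx := iter p (ncx_mul u) ncx_one.

(* the multiplicative inverse u^{-1} (an element w with u w = 1, chosen
   by classical choice; it exists and is unique when u is invertible) *)
Definition ncx_inv (u : ncx) : ncx :=
  epsilon (inhabits ncx_one) (fun w => ncx_mul u w = ncx_one).

Definition ncx_zpow (u : ncx) (m : int) : ncx :=
  match m with
  | Posz p => ncx_npow u p
  | Negz p => ncx_npow (ncx_inv u) p.+1
  end.

Definition ang (k p : nat) : R := 2 * pi * k%:R * p%:R / n%:R.

Definition v_plus (x : ncx) : R := \sum_(p < n) x p.
Definition v_minus (x : ncx) : R := \sum_(p < n) (-1) ^+ (val p) * x p.
Definition v_k (x : ncx) (k : nat) : R := \sum_(p < n) x p * cos (ang k p).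
Definition vt_k (x : ncx) (k : nat) : R := \sum_(p < n) x p * sin (ang k p).
Definition rho_k (x : ncx) (k : nat) : R := Num.sqrt (v_k x k ^+ 2 + vt_k x k ^+ 2).

Definition e_plus : ncx := fun p => n%:R^-1.
Definition e_minus : ncx := fun p => (-1) ^+ (val p) / n%:R.
Definition e_k (k : nat) : ncx := fun p => 2 / n%:R * cos (ang k p).
Definition et_k (k : nat) : ncx := fun p => 2 / n%:R * sin (ang k p).

End PolarNComplex.

(* Main.v *)
Require Import Defs.
From HB Require Import structures.
From mathcomp Require Import all_boot all_order all_algebra.
From mathcomp Require Import all_classical all_reals all_analysis.
From mathcomp Require Import complex.
From mathcomp Require Import ring lra zify.
From Stdlib Require Import ClassicalEpsilon.
Import Order.TTheory GRing.Theory Num.Theory.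
Set Implicit Arguments. Unset Strict Implicit. Unset Printing Implicit Defensive.
Local Open Scope ring_scope.
Local Open Scope complex_scope.

Local Ltac simpc := do ?
  [ rewrite -[(_ +i* _) - (_ +i* _)]/(_ +i* _)
  | rewrite -[(_ +i* _) + (_ +i* _)]/(_ +i* _)
  | rewrite -[(_ +i* _) * (_ +i* _)]/(_ +i* _)].

Section Work.
Variables (R : realType) (n : nat).
Hypothesis hn : (2 <= n)%N.
Local Notation C := (R[i]).

Definition ee (t : R) : C := Complex (cos t) (sin t).

Lemma eeD a b : ee (a + b) = ee a * ee b.
Proof.
rewrite /ee; simpc; rewrite cosD sinD; congr Complex; ring.
Qed.

Lemma ee0 : ee 0 = 1.
Proof. by rewrite /ee cos0 sin0. Qed.

Lemma eeX t k : ee t ^+ k = ee (k%:R * t).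
Proof.
elim: k => [|k IH]; first by rewrite expr0 mul0r ee0.
by rewrite exprS IH -eeD mulrSr mulrDl mul1r addrC.
Qed.

Lemma eeN t : ee (- t) = (ee t)^-1.
Proof.
have h : ee t * ee (- t) = 1 by rewrite -eeD subrr ee0.
have nz : ee t != 0.
  by apply/eqP => e; move: h; rewrite e mul0r => /eqP; rewrite eq_sym oner_eq0.
by rewrite -[ee (- t)]mul1r -(mulVf nz) -mulrA h mulr1.
Qed.

Lemma eeXz t (m : int) : ee t ^ m = ee (m%:~R * t).
Proof.
case: m => k; first by rewrite -exprnP eeX.
rewrite NegzE -exprnN eeX -eeN; congr ee.
rewrite intrN mulNr; congr (- (_ * _)).
Qed.

Definition om : C := ee (2 * pi / n%:R).

Lemma n_gt0 : (0 < n)%N. Proof. by apply: leq_trans hn. Qed.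
Lemma nR_neq0 : (n%:R : R) != 0. Proof. by rewrite pnatr_eq0 -lt0n n_gt0. Qed.
Lemma nC_neq0 : (n%:R : C) != 0. Proof. by rewrite pnatr_eq0 -lt0n n_gt0. Qed.

Lemma omX k : om ^+ k = ee (k%:R * (2 * pi / n%:R)).
Proof. by rewrite /om eeX. Qed.

Lemma omn : om ^+ n = 1.
Proof.
rewrite omX.
have -> : n%:R * (2 * pi / n%:R) = pi *+ 2 :> R.
  by rewrite -mulr_natr; field; exact: nR_neq0.
by rewrite /ee cos2pi sin2pi.
Qed.

Lemma omXmod a : om ^+ a = om ^+ (a %% n).
Proof.
by rewrite {1}(divn_eq a n) exprD mulnC exprM omn expr1n mul1r.
Qed.

Lemma om_prim d : (0 < d < n)%N -> om ^+ d != 1.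
Proof.
move=> /andP[d0 dn]; rewrite omX; apply/negP => /eqP E.
have [Ec Es] : cos (d%:R * (2 * (pi : R) / n%:R)) = 1 /\ sin (d%:R * (2 * (pi : R) / n%:R)) = 0.
  by split; [exact: (congr1 (@complex.Re R) E) | exact: (congr1 (@complex.Im R) E)].
pose s : R := pi * (d%:R / n%:R).
have st : d%:R * (2 * pi / n%:R) = s *+ 2.
  by rewrite /s -mulr_natr; ring.
have npos : (0 : R) < n%:R by rewrite ltr0n n_gt0.
have s0 : 0 < s by rewrite /s mulr_gt0 ?pi_gt0 // divr_gt0 // ltr0n.
have spi : s < pi.
  rewrite /s -{2}[pi]mulr1 ltr_pM2l ?pi_gt0 // ltr_pdivrMr // mul1r ltr_nat //.
have sgt : 0 < sin s by apply: sin_gt0_pi; rewrite s0 spi.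
move: Ec; rewrite st cos_mulr2n cos2sin2 => h.
have : sin s ^+ 2 = 0 by move: h; rewrite mulr2n; lra.
move/eqP; rewrite expf_eq0 /= => /eqP h2; by rewrite h2 ltxx in sgt.
Qed.

Lemma sum_om a : \sum_(p < n) om ^+ (a * p) = if (n %| a)%N then n%:R else 0.
Proof.
under eq_bigr do rewrite exprM.
case: ifP => na.
  have -> : om ^+ a = 1 by rewrite omXmod (eqP na) expr0.
  by under eq_bigr do rewrite expr1n; rewrite sumr_const card_ord.
rewrite omXmod; set z := om ^+ (a %% n).
have z1 : z != 1.
  apply: om_prim; rewrite ltn_mod n_gt0 andbT lt0n.
  by rewrite /dvdn in na; rewrite na.
have zn : z ^+ n = 1 by rewrite /z -exprM mulnC exprM omn expr1n.
have := subrX1 z n; rewrite zn subrr => /esym/eqP; rewrite mulf_eq0 subr_eq0 (negbTE z1) /=.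
by move/eqP.
Qed.

Definition G (j : nat) (z : 'I_n -> C) : C := \sum_(p < n) z p * om ^+ (j * p).
Definition Gr (j : nat) (x : ncx R n) : C := G j (fun p => (x p)%:C).
Definition E (a : nat) : 'I_n -> C := fun p => n%:R^-1 * om ^+ (a * p).

Lemma G_E j a : G j (E a) = if (n %| j + a)%N then 1 else 0.
Proof.
rewrite /G /E.
under eq_bigr do rewrite -mulrA -exprD -mulnDl addnC.
rewrite -mulr_sumr sum_om; case: ifP => _; last by rewrite mulr0.
by rewrite mulVf // nC_neq0.
Qed.

Lemma G_eq j f g : f =1 g -> G j f = G j g.
Proof. by move=> fg; apply: eq_bigr => p _; rewrite fg. Qed.

Lemma G_add j f g : G j (fun p => f p + g p) = G j f + G j g.
Proof. by rewrite /G -big_split; apply: eq_bigr => p _; rewrite mulrDl. Qed.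

Lemma G_scale j c f : G j (fun p => c * f p) = c * G j f.
Proof. by rewrite /G mulr_sumr; apply: eq_bigr => p _; rewrite mulrA. Qed.

Lemma G_sum j (I : Type) (r : seq I) (P : pred I) (F : I -> 'I_n -> C) :
  G j (fun p => \sum_(i <- r | P i) F i p) = \sum_(i <- r | P i) G j (F i).
Proof.
rewrite /G; under eq_bigr do rewrite mulr_suml.
by rewrite exchange_big.
Qed.

Lemma sum_if_ord (F : nat -> C) c : (c < n)%N ->
  \sum_(q < n) (if (c == q)%N then F q else 0) = F c.
Proof.
move=> cn; rewrite (bigD1 (Ordinal cn)) //= eqxx big1 ?addr0 // => q nq.
case: eqP => // e; exfalso; move/eqP: nq; apply; apply: val_inj => /=; by rewrite e.
Qed.

Lemma inv_formula (y : ncx R n) (p : 'I_n) :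
  n%:R * (y p)%:C = \sum_(j < n) Gr j y * om ^+ (j * (n - p)).
Proof.
rewrite /Gr /G.
under eq_bigr do rewrite mulr_suml.
rewrite exchange_big /=.
transitivity (\sum_(q < n) (y q)%:C * \sum_(j < n) om ^+ ((q + (n - p)) * j)); last first.
  apply: eq_bigr => q _; rewrite mulr_sumr; apply: eq_bigr => j _.
  by rewrite -mulrA -exprD -mulnDr mulnC.
under eq_bigr do rewrite sum_om.
have H : forall q : 'I_n, (n %| q + (n - p))%N = (p == q :> nat).
  move=> q; have := ltn_ord q; have := ltn_ord p; move=> hp hq.
  apply/idP/idP.
    move=> /dvdnP [k hk]; apply/eqP.
    have : (k = 1)%N by nia.
    by move=> k1; rewrite k1 mul1n in hk; lia.
  by move=> /eqP <-; rewrite subnKC ?dvdnn // ltnW.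
under eq_bigr do rewrite H.
rewrite (bigD1 p) //= eqxx big1 ?addr0; first by rewrite mulrC.
move=> q nq; case: eqP => e; last by rewrite mulr0.
by exfalso; move/eqP: nq; apply; apply: val_inj.
Qed.

Lemma Gr_inj y z : (forall j, (j < n)%N -> Gr j y = Gr j z) -> y = z.
Proof.
move=> h; apply: boolp.funext => p.
have e : n%:R * (y p)%:C = n%:R * (z p)%:C.
  rewrite !inv_formula; apply: eq_bigr => j _; by rewrite h.
move: (mulfI nC_neq0 e); exact: complexI.
Qed.

Lemma Gr_mul j u w : Gr j (ncx_mul u w) = Gr j u * Gr j w.
Proof.
rewrite /Gr /G /ncx_mul.
transitivity (\sum_(q < n) \sum_(a < n) \sum_(b < n)
   (if ((a + b) %% n == q)%N then (u a)%:C * (w b)%:C * om ^+ (j * q) else 0)).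
  apply: eq_bigr => q _; rewrite rmorph_sum mulr_suml; apply: eq_bigr => a _.
  rewrite rmorph_sum mulr_suml; apply: eq_bigr => b _.
  by case: ifP => _; [rewrite rmorphM | rewrite rmorph0 mul0r].
rewrite exchange_big /=; rewrite mulr_suml; apply: eq_bigr => a _.
rewrite exchange_big /=; rewrite mulr_sumr; apply: eq_bigr => b _.
rewrite (sum_if_ord (fun q => (u a)%:C * (w b)%:C * om ^+ (j * q))) ?ltn_mod ?n_gt0 //.
rewrite omXmod modnMmr -omXmod mulnDr exprD; ring.
Qed.

Lemma Gr_one j : Gr j (@ncx_one R n) = 1.
Proof.
rewrite /Gr /G /ncx_one (bigD1 (Ordinal n_gt0)) //= muln0 expr0 mulr1 big1 ?addr0 //.
move=> q nq; case: eqP => e; last by rewrite mul0r.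
by exfalso; move/eqP: nq; apply; apply: val_inj.
Qed.

Lemma Gr_npow j u k : Gr j (ncx_npow u k) = Gr j u ^+ k.
Proof.
elim: k => [|k IH]; first by rewrite expr0 /ncx_npow /= Gr_one.
by rewrite /ncx_npow iterS -/(ncx_npow u k) Gr_mul IH exprS.
Qed.

Lemma om_ang k p : om ^+ (k * p) = ee (ang R n k p).
Proof. by rewrite omX /ang natrM; congr ee; ring. Qed.

Lemma sumC (I : Type) (r : seq I) (f g : I -> R) :
  \sum_(i <- r) Complex (f i) (g i) = Complex (\sum_(i <- r) f i) (\sum_(i <- r) g i) :> C.
Proof. by elim: r => [|a r IH]; rewrite ?big_nil // !big_cons IH. Qed.

Lemma Gr_k x k : Gr k x = Complex (v_k x k) (vt_k x k).
Proof.
rewrite /Gr /G /v_k /vt_k -sumC; apply: eq_bigr => p _.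
rewrite om_ang /ee; simpc; congr Complex; ring.
Qed.

Lemma Gr_0 x : Gr 0 x = (v_plus x)%:C.
Proof.
rewrite /Gr /G /v_plus rmorph_sum; apply: eq_bigr => p _.
by rewrite mul0n expr0 mulr1.
Qed.

Lemma conj_ee t : conjc (ee t) = ee (- t).
Proof. by rewrite /ee cosN sinN. Qed.

Lemma om_conj k p : (k <= n)%N -> om ^+ ((n - k) * p) = ee (- ang R n k p).
Proof.
move=> kn; rewrite eeN -om_ang.
have nz : om ^+ (k * p) != 0.
  rewrite om_ang; apply/eqP => e.
  have := eeD (ang R n k p) (- ang R n k p); rewrite e mul0r subrr ee0 => /eqP.
  by rewrite oner_eq0.
apply: (mulIf nz); rewrite mulVf // -exprD -mulnDl subnK //.
by rewrite exprM omn expr1n.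
Qed.

Lemma Gr_conj x k : (k <= n)%N -> Gr (n - k) x = conjc (Gr k x).
Proof.
move=> kn; rewrite /Gr /G rmorph_sum; apply: eq_bigr => p _.
rewrite rmorphM /=; congr (_ * _); last by rewrite om_conj // om_ang conj_ee.
by apply/eqP; rewrite eq_complex /= oppr0 !eqxx.
Qed.

Lemma half_fact : ~~ odd n -> n./2%:R * (2 * pi / n%:R) = pi :> R.
Proof.
move=> ev; have e : n = (n./2 * 2)%N.
  by rewrite -{1}(odd_double_half n) (negbTE ev) add0n -muln2.
have : (n%:R : R) = n./2%:R * 2 by rewrite {1}e natrM.
move=> ->; field.
rewrite pnatr_eq0 -lt0n half_gt0; exact: hn.
Qed.

Lemma om_half : ~~ odd n -> om ^+ n./2 = -1.
Proof.
move=> ev; rewrite omX half_fact //; apply/eqP; rewrite eq_complex /= cospi sinpi oppr0.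
by rewrite !eqxx.
Qed.

Lemma Gr_half x : ~~ odd n -> Gr n./2 x = (v_minus x)%:C.
Proof.
move=> ev; rewrite /Gr /G /v_minus rmorph_sum; apply: eq_bigr => p _.
by rewrite exprM om_half // rmorphM rmorphXn rmorphN1 mulrC.
Qed.

Lemma realXz (r : R) (m : int) : (r ^ m)%:C = (r%:C) ^ m :> C.
Proof. by rewrite fmorphXz. Qed.

Lemma conjXz (z : C) (m : int) : conjc (z ^ m) = (conjc z) ^ m.
Proof. by rewrite fmorphXz. Qed.

Definition termk (x : ncx R n) (phi : nat -> R) (m : int) (k : nat) (p : 'I_n) : R :=
  if rho_k x k == 0 then 0 else
  rho_k x k ^ m * (e_k R k p * cos (m%:~R * phi k) + et_k R k p * sin (m%:~R * phi k)).

Lemma ninvC : (n%:R : C)^-1 = ((n%:R : R)^-1)%:C.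
Proof. by rewrite fmorphV rmorph_nat. Qed.

Lemma rho0 (x : ncx R n) k : rho_k x k = 0 -> v_k x k = 0 /\ vt_k x k = 0.
Proof.
rewrite /rho_k => /eqP; rewrite sqrtr_eq0 => h.
have h0 : v_k x k ^+ 2 + vt_k x k ^+ 2 = 0.
  by apply/eqP; rewrite eq_le h addr_ge0 // sqr_ge0.
move/eqP: h0; rewrite paddr_eq0 ?sqr_ge0 // !expf_eq0 /= => /andP[/eqP -> /eqP ->].
by [].
Qed.

Lemma term_C (x : ncx R n) phi m k (p : 'I_n) : (1 <= k)%N -> (k <= n)%N ->
  (m <= 0 -> rho_k x k != 0) ->
  (0 < rho_k x k -> cos (phi k) = v_k x k / rho_k x k /\ sin (phi k) = vt_k x k / rho_k x k) ->
  (termk x phi m k p)%:C = conjc (Gr k x ^ m) * E k p + Gr k x ^ m * E (n - k) p.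
Proof.
move=> k1 kn hnz hph; rewrite /termk.
have Ek : E k p = ((n%:R : R)^-1)%:C * ee (ang R n k p) by rewrite /E om_ang ninvC.
have Enk : E (n - k) p = ((n%:R : R)^-1)%:C * ee (- ang R n k p) by rewrite /E om_conj // ninvC.
case: eqP => [r0|/eqP rnz].
  have [v0 vt0] := rho0 r0.
  have G0 : Gr k x = 0 by rewrite Gr_k v0 vt0.
  have mpos : 0 < m by rewrite ltNge; apply/negP => /hnz; rewrite r0 eqxx.
  rewrite G0 exp0rz gt_eqF // (_ : false%:~R = 0) // conjc0 !mul0r addr0; exact: rmorph0.
have rpos : 0 < rho_k x k by rewrite lt_def rnz sqrtr_ge0.
have [c s] := hph rpos.
have GF : Gr k x = (rho_k x k)%:C * ee (phi k).
  rewrite Gr_k /ee /real_complex_def; simpc; congr Complex; rewrite ?c ?s; field; exact: rnz.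
rewrite GF expfzMl -realXz eeXz rmorphM /= Ek Enk /ee /e_k /et_k /real_complex_def.
simpc; congr Complex; rewrite ?cosN ?sinN; ring.
Qed.

Definition K := ((n - 1)./2)%N.

Definition T (x : ncx R n) (phi : nat -> R) (m : int) : ncx R n := fun p =>
  e_plus R p * v_plus x ^ m + (if odd n then 0 else e_minus R p * v_minus x ^ m)
  + \sum_(1 <= k < K.+1) termk x phi m k p.

Lemma parity : (odd n /\ n = K.*2.+1) \/ (~~ odd n /\ n = K.*2.+2 /\ n./2 = K.+1).
Proof.
have o : odd (n - 1) = ~~ odd n.
  by case: n hn => // n' _; rewrite subSS subn0 /= negbK.
have h1 := odd_double_half n; have h2 := odd_double_half (n - 1).
rewrite /K; case: (boolP (odd n)) => on; [left|right].
  split => //; move: h1 h2; rewrite o on /= => h1 h2; rewrite -!muln2 in h1 h2 *; lia.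
move: h1 h2; rewrite o (negbTE on) /= => h1 h2; rewrite -!muln2 in h1 h2 *.
repeat split => //; lia.
Qed.

Lemma K_lt : (K < n)%N.
Proof. case: parity => [[_ e]|[_ [e _]]]; rewrite -muln2 in e; lia. Qed.

Lemma sum_delta (f : nat -> C) a b t :
  \sum_(a <= k < b) f k * (if k == t then 1 else 0) = if (a <= t < b)%N then f t else 0.
Proof.
elim: b => [|b IH]; first by rewrite big_geq // ltn0 andbF.
have [ab|ba] := leqP a b.
  rewrite big_nat_recr //= IH; case: (eqVneq b t) => [<-|nbt].
    by rewrite mulr1 ltnn andbF add0r ab ltnSn.
  have tb : (t == b) = false by apply/eqP => e; move: nbt; rewrite e eqxx.
  by rewrite mulr0 addr0 ltnS (leq_eqVlt t b) tb.
rewrite big_geq //; case: ifP => // /andP[h1 h2]; lia.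
Qed.

Lemma G_E' j a : G j (fun p => E a p) = if (n %| j + a)%N then 1 else 0.
Proof. exact: G_E. Qed.

Lemma G_zero j : G j (fun _ => 0) = 0.
Proof. by rewrite /G big1 // => p _; rewrite mul0r. Qed.

Lemma G_combo j c0 b c1 a1 (c d : nat -> C) :
  G j (fun p => c0 * E 0 p + (if b then 0 else c1 * E a1 p)
     + \sum_(1 <= k < K.+1) (c k * E k p + d k * E (n - k) p))
  = c0 * (if (n %| j + 0)%N then 1 else 0) + (if b then 0 else c1 * (if (n %| j + a1)%N then 1 else 0))
    + \sum_(1 <= k < K.+1) (c k * (if (n %| j + k)%N then 1 else 0)
                             + d k * (if (n %| j + (n - k))%N then 1 else 0)).
Proof.
rewrite G_add G_add G_scale G_E; congr (_ + _ + _).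
  by case: b; [rewrite G_zero | rewrite G_scale ?G_E ?G_E'].
rewrite (G_sum j (index_iota 1 K.+1) xpredT (fun k p => c k * E k p + d k * E (n - k) p)).
apply: eq_bigr; move=> k _.
by rewrite G_add (G_scale j (c k) (E k)) (G_scale j (d k) (E (n - k))) !G_E.
Qed.

Lemma dvd_small s : (0 < s)%N -> (s < n + n)%N -> (n %| s)%N = (s == n).
Proof.
move=> s0 s2; apply/idP/eqP => [/dvdnP [q hq]|->]; last exact: dvdnn.
have q1 : q = 1%N.
  case: q hq => [|[|q]] hq; first by rewrite hq in s0.
    by [].
  by exfalso; rewrite hq in s2; nia.
by rewrite hq q1 mul1n.
Qed.

Section Key.
Variables (x : ncx R n) (m : int) (phi : nat -> R).
Hypothesis hneg : m <= 0 ->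
     [/\ v_plus x != 0,
         (~~ odd n -> v_minus x != 0)
       & forall k : nat, (1 <= k <= (n - 1)./2)%N -> rho_k x k != 0].
Hypothesis hphi : forall k : nat, (1 <= k <= (n - 1)./2)%N -> 0 < rho_k x k ->
     cos (phi k) = v_k x k / rho_k x k /\ sin (phi k) = vt_k x k / rho_k x k.

Lemma T_C p :
  (T x phi m p)%:C = (v_plus x ^ m)%:C * E 0 p
     + (if odd n then 0 else (v_minus x ^ m)%:C * E n./2 p)
     + \sum_(1 <= k < K.+1) (conjc (Gr k x ^ m) * E k p + Gr k x ^ m * E (n - k) p).
Proof.
rewrite /T !rmorphD rmorph_sum /=; congr (_ + _ + _).
- by rewrite rmorphM /= mulrC /E mul0n expr0 mulr1 ninvC.
- case: ifP => on; first by rewrite rmorph0.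
  rewrite rmorphM /= /E exprM om_half ?on // /e_minus rmorphM /= ninvC rmorphXn rmorphN1.
  ring.
- apply: eq_big_nat => k /andP[k1 kK]; apply: term_C => //.
  + by have := K_lt; lia.
  + by move=> hm; have [_ _ h] := hneg hm; apply: h; rewrite k1 -ltnS.
  + by apply: hphi; rewrite k1 -ltnS.
Qed.

Lemma GrT j : (j < n)%N -> Gr j (T x phi m) = Gr j x ^ m.
Proof.
move=> jn; rewrite {1}/Gr.
rewrite (@G_eq j _ (fun p => (v_plus x ^ m)%:C * E 0 p
     + (if odd n then 0 else (v_minus x ^ m)%:C * E n./2 p)
     + \sum_(1 <= k < K.+1) (conjc (Gr k x ^ m) * E k p + Gr k x ^ m * E (n - k) p))); last first.
  by move=> p; apply: T_C.
rewrite G_combo big_split /=.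
have hA : forall k, (1 <= k < K.+1)%N -> (n %| j + k)%N = (k == (n - j)%N).
  by move=> k hk; have := K_lt => hK; rewrite dvd_small; lia.
have hB : forall k, (1 <= k < K.+1)%N -> (n %| j + (n - k))%N = (k == j).
  by move=> k hk; have := K_lt => hK; rewrite dvd_small; lia.
under eq_big_nat => k hk do rewrite (hA k hk).
under [X in _ + (_ + X) = _]eq_big_nat => k hk do rewrite (hB k hk).
rewrite (sum_delta (fun k => conjc (Gr k x ^ m))) (sum_delta (fun k => Gr k x ^ m)).
have cj : (K < j)%N -> conjc (Gr (n - j)%N x ^ m) = Gr j x ^ m.
  move=> Kj; rewrite conjXz -Gr_conj ?leq_subr // subKn //; exact: ltnW.
case: parity => [[on e]|[on [e h]]]; rewrite -muln2 in e.
- rewrite on /= addr0 addn0.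
  have [j0|jpos] := posnP j.
    subst j; rewrite dvdn0 mulr1 Gr_0 realXz.
    case: ifP => H1; first by exfalso; lia.
    by rewrite /= add0r !addr0.
  rewrite (_ : (n %| j)%N = false); last by apply/negbTE/negP => /(dvdn_leq jpos); lia.
  rewrite mulr0 add0r.
  case: ifP => H1; case: ifP => H2; try (exfalso; lia).
    by rewrite addr0 cj //; lia.
  by rewrite add0r.
- rewrite (negbTE on) addn0 h.
  rewrite (_ : (n %| j + K.+1)%N = (j == K.+1)); last by rewrite dvd_small; lia.
  have [j0|jpos] := posnP j.
    subst j; rewrite dvdn0 mulr1 Gr_0 realXz.
    case: ifP => H0; first by exfalso; lia.
    by rewrite /= add0r !addr0 mulr0 addr0.
  rewrite (_ : (n %| j)%N = false); last by apply/negbTE/negP => /(dvdn_leq jpos); lia.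
  rewrite mulr0 add0r.
  case: ifP => H0; case: ifP => H1; case: ifP => H2; try (exfalso; lia).
  + by rewrite (eqP H0) mulr1 !addr0 -h Gr_half // realXz.
  + by rewrite mulr0 add0r addr0 cj //; lia.
  + by rewrite mulr0 !add0r.
Qed.

Lemma Gr_nz : m <= 0 -> forall j, (j < n)%N -> Gr j x != 0.
Proof.
move=> hm j jn; have [c1 c2 c3] := hneg hm.
have hK := K_lt.
have [j0|jpos] := posnP j.
  by subst j; rewrite Gr_0; apply: contra c1 => /eqP h; apply/eqP; apply: complexI.
have inner : forall k, (1 <= k <= K)%N -> Gr k x != 0.
  move=> k hk; rewrite Gr_k; apply/negP => /eqP h.
  have [hv hvt] : v_k x k = 0 /\ vt_k x k = 0 by case: h.
  have := c3 k hk; rewrite /rho_k hv hvt expr0n /= addr0 sqrtr0 eqxx //.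
have [jK|Kj] := leqP j K; first by apply: inner; rewrite jpos jK.
case: parity => [[on e]|[on [e h]]]; rewrite -muln2 in e.
  have -> : j = (n - (n - j))%N by rewrite subKn // ltnW.
  rewrite Gr_conj ?leq_subr // conjc_eq0; apply: inner; lia.
have [jh|jh] := eqVneq j K.+1.
  rewrite jh -h Gr_half //; apply: contra (c2 on) => /eqP hh; apply/eqP; apply: complexI.
  exact: hh.
have -> : j = (n - (n - j))%N by rewrite subKn // ltnW.
rewrite Gr_conj ?leq_subr // conjc_eq0; apply: inner; lia.
Qed.

End Key.

Lemma zpow_T (x : ncx R n) (m : int) (phi : nat -> R)
  (hneg : m <= 0 ->
     [/\ v_plus x != 0,
         (~~ odd n -> v_minus x != 0)
       & forall k : nat, (1 <= k <= (n - 1)./2)%N -> rho_k x k != 0])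
  (hphi : forall k : nat, (1 <= k <= (n - 1)./2)%N -> 0 < rho_k x k ->
     cos (phi k) = v_k x k / rho_k x k /\ sin (phi k) = vt_k x k / rho_k x k) :
  ncx_zpow x m = T x phi m.
Proof.
apply: Gr_inj => j jn; rewrite GrT //.
case: m hneg => k hneg'.
  by rewrite /ncx_zpow Gr_npow exprnP.
have hm : Negz k <= 0 by [].
have nz := Gr_nz hneg' hm.
have hneg1 : (-1 : int) <= 0 -> [/\ v_plus x != 0, (~~ odd n -> v_minus x != 0)
       & forall k : nat, (1 <= k <= (n - 1)./2)%N -> rho_k x k != 0].
  by move=> _; apply: hneg'.
have ex : exists w, ncx_mul x w = @ncx_one R n.
  exists (T x phi (-1)); apply: Gr_inj => i iN.
  rewrite Gr_mul Gr_one (GrT hneg1 hphi iN) (_ : Gr i x ^ (-1) = (Gr i x)^-1) // mulfV //; exact: nz.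
have inv : ncx_mul x (ncx_inv x) = @ncx_one R n.
  exact: (ClassicalEpsilon.epsilon_spec _ _ ex).
have Gi : Gr j (ncx_inv x) = (Gr j x)^-1.
  have h := congr1 (Gr j) inv; rewrite Gr_mul Gr_one in h.
  by rewrite -[LHS](mulKf (nz j jn)) h mulr1.
by rewrite /ncx_zpow Gr_npow Gi exprVn.
Qed.

Lemma main_in (x : ncx R n) (m : int)
  (hneg : m <= 0 ->
     [/\ v_plus x != 0,
         (~~ odd n -> v_minus x != 0)
       & forall k : nat, (1 <= k <= (n - 1)./2)%N -> rho_k x k != 0])
  (phi : nat -> R)
  (hphi : forall k : nat, (1 <= k <= (n - 1)./2)%N -> 0 < rho_k x k ->
     cos (phi k) = v_k x k / rho_k x k /\ sin (phi k) = vt_k x k / rho_k x k) :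
  (~~ odd n ->
     ncx_zpow x m =
     (fun p : 'I_n =>
        e_plus R p * v_plus x ^ m + e_minus R p * v_minus x ^ m
        + \sum_(1 <= k < (n./2 - 1).+1)
            (if rho_k x k == 0 then 0 else
             rho_k x k ^ m * (e_k R k p * cos (m%:~R * phi k)
                              + et_k R k p * sin (m%:~R * phi k)))))
  /\
  (odd n ->
     ncx_zpow x m =
     (fun p : 'I_n =>
        e_plus R p * v_plus x ^ m
        + \sum_(1 <= k < ((n - 1)./2).+1)
            (if rho_k x k == 0 then 0 else
             rho_k x k ^ m * (e_k R k p * cos (m%:~R * phi k)
                              + et_k R k p * sin (m%:~R * phi k))))).
Proof.
rewrite (zpow_T hneg hphi); split => on; apply: boolp.funext => p; rewrite /T /termk.
  have -> : (n./2 - 1)%N = K.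
    by case: parity => [[oo _]|[_ [_ h]]]; [rewrite oo in on | rewrite h subn1].
  by rewrite (negbTE on).
by rewrite on addr0.
Qed.

End Work.

Theorem mainTheorem11 (R : realType) (n : nat) (hn : (2 <= n)%N)
  (x : ncx R n) (m : int)
  (hneg : m <= 0 ->
     [/\ v_plus x != 0,
         (~~ odd n -> v_minus x != 0)
       & forall k : nat, (1 <= k <= (n - 1)./2)%N -> rho_k x k != 0])
  (phi : nat -> R)
  (hphi : forall k : nat, (1 <= k <= (n - 1)./2)%N -> 0 < rho_k x k ->
     cos (phi k) = v_k x k / rho_k x k /\ sin (phi k) = vt_k x k / rho_k x k) :
  (~~ odd n ->
     ncx_zpow x m =
     (fun p : 'I_n =>
        e_plus R p * v_plus x ^ m + e_minus R p * v_minus x ^ m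
        + \sum_(1 <= k < (n./2 - 1).+1)
            (if rho_k x k == 0 then 0 else
             rho_k x k ^ m * (e_k R k p * cos (m%:~R * phi k)
                              + et_k R k p * sin (m%:~R * phi k)))))
  /\
  (odd n ->
     ncx_zpow x m =
     (fun p : 'I_n =>
        e_plus R p * v_plus x ^ m
        + \sum_(1 <= k < ((n - 1)./2).+1)
            (if rho_k x k == 0 then 0 else
             rho_k x k ^ m * (e_k R k p * cos (m%:~R * phi k)
                              + et_k R k p * sin (m%:~R * phi k))))).
Proof. exact: (main_in hn hneg hphi). Qed.
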